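(* Consider the extreme Reissner–Nordström case $a=0$, $Q\neq0$, $M=\rho=|Q|$. Then for every half-integer $k$ and all $m>0$, $e\in\mathbb{R}$, there is no energy eigenvalue $\omega\in\mathbb{R}$; i.e., bound state solutions of the Dirac equation (of the separated form considered) do not exist in the extreme Reissner–Nordström geometry.
   Context: Fix real numbers $M>0$, $a$, $Q$ with $M^2=a^2+Q^2$ and put $\rho:=M$. Fix the rest mass $m>0$ and charge $e\in\mathbb{R}$ of a Dirac particle and a half-integer $k\in\{\pm\frac12,\pm\frac32,\dots\}$. For $\omega,\lambda\in\mathbb{R}$ consider the radial system for $f:(\rho,\infty)\to\mathbb{C}^2$, $$\begin{pmatrix}(r-\rho)\frac{d}{dr}+\frac{iV(r)}{r-\rho} & imr-\lambda\\ -imr-\lambda & (r-\rho)\frac{d}{dr}-\frac{iV(r)}{r-\rho}\end{pmatrix}f(r)=0,\qquad V(r):=\omega(r^2+a^2)+ka+eQr,$$ and the angular system for $g:(0,\pi)\to\mathbb{C}^2$, $$\begin{pmatrix}\frac{d}{d\theta}+\frac{\cot\theta}{2}-W(\theta) & -am\cos\theta+\lambda\\ am\cos\theta+\lambda & -\frac{d}{d\theta}-\frac{\cot\theta}{2}-W(\theta)\end{pmatrix}g(\theta)=0,\qquad W(\theta):=a\omega\sin\theta+\frac{k}{\sin\theta}.$$ A number $\omega\in\mathbb{R}$ is called an energy eigenvalue (for azimuthal quantum number $k$) if there exist $\lambda\in\mathbb{R}$ and nontrivial solutions $f$ of the radial system and $g$ of the angular system with $$\int_\rho^\infty|f(r)|^2\frac{r^2+a^2}{(r-\rho)^2}\,dr<\infty,\qquad\int_0^\pi|g(\theta)|^2\sin\theta\,d\theta<\infty.$$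 *)

(* Defs.v *)
From Stdlib Require Import Reals ZArith.
From Coquelicot Require Import Coquelicot.
Open Scope R_scope.

Definition half_integer (k : R) : Prop := exists z : Z, k = IZR z + / 2.

Definition Vpot (a Q omega k e : R) (r : R) : R :=
  omega * (r ^ 2 + a ^ 2) + k * a + e * Q * r.

Definition Wpot (a omega k : R) (th : R) : R :=
  a * omega * sin th + k / sin th.

Definition radial_solution (rho a Q m e k omega lambda : R) (f : R -> C * C) : Prop :=
  forall r, rho < r ->
  exists d1 d2 : C,
    is_derive (fun s => fst (f s)) r d1 /\
    is_derive (fun s => snd (f s)) r d2 /\
    let V := Vpot a Q omega k e r in
    (RtoC (r - rho) * d1 + Ci * RtoC (V / (r - rho)) * fst (f r)
       + (Ci * RtoC (m * r) - RtoC lambda) * snd (f r) = 0)%C /\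
    ((- (Ci * RtoC (m * r)) - RtoC lambda) * fst (f r)
       + RtoC (r - rho) * d2 - Ci * RtoC (V / (r - rho)) * snd (f r) = 0)%C.

Definition angular_solution (a m k omega lambda : R) (g : R -> C * C) : Prop :=
  forall th, 0 < th < PI ->
  exists d1 d2 : C,
    is_derive (fun s => fst (g s)) th d1 /\
    is_derive (fun s => snd (g s)) th d2 /\
    let W := Wpot a omega k th in
    let ct := cos th / sin th in
    (d1 + RtoC (ct / 2) * fst (g th) - RtoC W * fst (g th)
       + RtoC (- (a * m * cos th) + lambda) * snd (g th) = 0)%C /\
    (RtoC (a * m * cos th + lambda) * fst (g th)
       - d2 - RtoC (ct / 2) * snd (g th) - RtoC W * snd (g th) = 0)%C.

Definition normsq2 (v : C * C) : R := (Cmod (fst v)) ^ 2 + (Cmod (snd v)) ^ 2.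

Definition radial_L2 (rho a : R) (f : R -> C * C) : Prop :=
  ex_RInt_gen (fun r => normsq2 (f r) * (r ^ 2 + a ^ 2) / (r - rho) ^ 2)
    (at_right rho) (Rbar_locally p_infty).

Definition angular_L2 (g : R -> C * C) : Prop :=
  ex_RInt_gen (fun th => normsq2 (g th) * sin th) (at_right 0) (at_left PI).

Definition energy_eigenvalue (M a Q m e k omega : R) : Prop :=
  let rho := M in
  exists (lambda : R) (f g : R -> C * C),
    radial_solution rho a Q m e k omega lambda f /\
    (exists r, rho < r /\ f r <> (RtoC 0, RtoC 0)) /\
    radial_L2 rho a f /\
    angular_solution a m k omega lambda g /\
    (exists th, 0 < th < PI /\ g th <> (RtoC 0, RtoC 0)) /\
    angular_L2 g.

(* Main.v *)
Require Import Defs.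
From Stdlib Require Import Reals ZArith Lra Lia.
From Coquelicot Require Import Coquelicot.
Open Scope R_scope.

Lemma D_mult (f g : R -> R) (x df dg : R) : is_derive f x df -> is_derive g x dg ->
  is_derive (fun t => f t * g t) x (df * g x + f x * dg).
Proof. intros H1 H2. apply (is_derive_mult f g x df dg H1 H2). intros; apply Rmult_comm. Qed.
Lemma D_plus (f g : R -> R) (x df dg : R) : is_derive f x df -> is_derive g x dg ->
  is_derive (fun t => f t + g t) x (df + dg).
Proof. intros H1 H2. apply (is_derive_plus f g x df dg H1 H2). Qed.
Lemma D_eq (f : R -> R) (x l l' : R) : is_derive f x l -> l = l' -> is_derive f x l'.
Proof. intros H ->; exact H. Qed.
Lemma D_exp_comp (g : R -> R) (x dg : R) : is_derive g x dg ->
  is_derive (fun t => exp (g t)) x (dg * exp (g x)).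
Proof. intros H. apply (is_derive_comp exp g x (exp (g x)) dg (is_derive_exp _) H). Qed.
Lemma D_id (x : R) : is_derive (fun t : R => t) x 1.
Proof. apply (is_derive_id x). Qed.
Lemma D_const (c x : R) : is_derive (fun _ : R => c) x 0.
Proof. apply (is_derive_const c x). Qed.
Lemma D_scal (f : R -> R) (x c df : R) : is_derive f x df -> is_derive (fun t => c * f t) x (c * df).
Proof. apply is_derive_scal. Qed.

Lemma mono (g dg : R -> R) a b : a <= b ->
  (forall t, a <= t <= b -> is_derive g t (dg t)) ->
  (forall t, a <= t <= b -> 0 <= dg t) -> g a <= g b.
Proof.
  intros Hab Hd Hp.
  destruct (MVT_gen g a b dg) as [c [Hc He]].
  - intros t Ht. apply Hd. rewrite Rmin_left in Ht by lra. rewrite Rmax_right in Ht by lra. lra.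
  - intros t Ht. rewrite Rmin_left in Ht by lra. rewrite Rmax_right in Ht by lra.
    apply continuity_pt_filterlim. apply (ex_derive_continuous g). exists (dg t). apply Hd; lra.
  - rewrite Rmin_left in Hc by lra. rewrite Rmax_right in Hc by lra.
    assert (0 <= dg c * (b - a)) by (apply Rmult_le_pos; [apply Hp; lra| lra]). lra.
Qed.

Lemma grow_fwd (g dg : R -> R) a b C : a <= b ->
  (forall t, a <= t <= b -> is_derive g t (dg t)) ->
  (forall t, a <= t <= b -> - C * g t <= dg t) -> g a * exp (C * (a - b)) <= g b.
Proof.
  intros Hab Hd Hp.
  assert (H := mono (fun t => g t * exp (C * t)) (fun t => (dg t + C * g t) * exp (C * t)) a b Hab).
  assert (H' : g a * exp (C * a) <= g b * exp (C * b)).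
  { apply H.
    - intros t Ht. eapply D_eq. apply D_mult. apply Hd; lra. apply D_exp_comp.
      eapply D_eq. apply D_scal. apply D_id. reflexivity. simpl. ring.
    - intros t Ht. apply Rmult_le_pos. specialize (Hp t Ht). lra. apply Rlt_le, exp_pos. }
  replace (C * (a - b)) with (C * a + - (C * b)) by ring. rewrite exp_plus.
  apply (Rmult_le_reg_r (exp (C * b))). apply exp_pos.
  replace (g a * (exp (C * a) * exp (- (C * b))) * exp (C * b)) with (g a * exp (C * a) * (exp (- (C*b)) * exp (C * b))) by ring.
  rewrite <- exp_plus. replace (- (C * b) + C * b) with 0 by ring. rewrite exp_0. lra.
Qed.

Lemma D_opp (f : R -> R) (x df : R) : is_derive f x df -> is_derive (fun t => - f t) x (- df).
Proof. intros H. apply (D_eq _ _ (-1*df)); [|ring]. eapply is_derive_ext; [|apply (D_scal f x (-1) df H)]. intros; simpl; ring. Qed.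

Lemma grow_bwd (g dg : R -> R) a b C : a <= b ->
  (forall t, a <= t <= b -> is_derive g t (dg t)) ->
  (forall t, a <= t <= b -> dg t <= C * g t) -> g b * exp (C * (a - b)) <= g a.
Proof.
  intros Hab Hd Hp.
  assert (H := grow_fwd (fun t => - g t) (fun t => - dg t) a b (- C) Hab).
  assert (H' : - g a * exp (- C * (a - b)) <= - g b).
  { apply H. intros; apply D_opp; apply Hd; auto. intros t Ht; specialize (Hp t Ht); lra. }
  assert (E : exp (- C * (a - b)) * exp (C * (a - b)) = 1).
  { rewrite <- exp_plus. replace (- C * (a - b) + C * (a - b)) with 0 by ring. apply exp_0. }
  assert (P : 0 < exp (C * (a - b))) by apply exp_pos.
  assert (H2 : g b * exp (C * (a - b)) <= g a * exp (- C * (a - b)) * exp (C * (a - b))).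
  { apply Rmult_le_compat_r; lra. }
  rewrite Rmult_assoc, E in H2. lra.
Qed.

Lemma grow_inf (g dg : R -> R) a b K : 0 < a -> a <= b ->
  (forall t, a <= t <= b -> is_derive g t (dg t)) ->
  (forall t, a <= t <= b -> - K * g t / (t * t) <= dg t) ->
  g a * exp (- K / a) <= g b * exp (- K / b).
Proof.
  intros Ha Hab Hd Hp.
  apply (mono (fun t => g t * exp (- K * / t)) (fun t => (dg t + K * g t / (t*t)) * exp (- K / t)) a b Hab).
  - intros t Ht. eapply D_eq. apply D_mult. apply Hd; lra. apply D_exp_comp.
    apply D_scal. apply is_derive_inv. apply D_id. lra.
    unfold Rdiv. field. lra.
  - intros t Ht. apply Rmult_le_pos. specialize (Hp t Ht). lra. apply Rlt_le, exp_pos.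
Qed.

Lemma at_right_interval a (P : R -> Prop) : at_right a P -> exists d, 0 < d /\ forall t, a < t < a + d -> P t.
Proof.
  intros [e He]. exists e. split. apply cond_pos. intros t Ht. apply He.
  unfold ball; simpl; unfold AbsRing_ball, abs, minus, plus, opp; simpl. apply Rabs_def1; lra. lra.
Qed.
Lemma at_left_interval a (P : R -> Prop) : at_left a P -> exists d, 0 < d /\ forall t, a - d < t < a -> P t.
Proof.
  intros [e He]. exists e. split. apply cond_pos. intros t Ht. apply He.
  unfold ball; simpl; unfold AbsRing_ball, abs, minus, plus, opp; simpl. apply Rabs_def1; lra. lra.
Qed.
Lemma pinfty_interval (P : R -> Prop) : Rbar_locally p_infty P -> exists M, forall t, M < t -> P t.
Proof. intros [M HM]. exists M. exact HM. Qed.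

Lemma locally_ball_R (l e : R) : 0 < e -> locally l (fun y : R => Rabs (y - l) < e).
Proof.
  intros He. exists (mkposreal e He). intros y Hy. unfold ball in Hy; simpl in Hy;
  unfold AbsRing_ball, abs, minus, plus, opp in Hy; simpl in Hy. exact Hy.
Qed.

Lemma gen_pair (h : R -> R) Fa Fb : ex_RInt_gen h Fa Fb ->
  forall eps, 0 < eps -> exists (l : R) (Q Rr : R -> Prop), Fa Q /\ Fb Rr /\
   forall t s, Q t -> Rr s -> exists y, is_RInt h t s y /\ Rabs (y - l) < eps.
Proof.
  intros [l Hl] eps Heps.
  specialize (Hl _ (locally_ball_R l eps Heps)).
  destruct Hl as [Q Rr HQ HR HQR].
  exists l, Q, Rr. split; [exact HQ|]. split; [exact HR|]. exact HQR.
Qed.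

Lemma chasles3 (h : R -> R) a b c y1 y2 : is_RInt h a b y1 -> is_RInt h a c y2 -> is_RInt h b c (y2 - y1).
Proof.
  intros H1 H2. replace (y2 - y1) with (plus (opp y1) y2) by (simpl; unfold plus, opp; simpl; ring).
  apply (is_RInt_Chasles (V:=R_NormedModule) h b a c). apply is_RInt_swap. exact H1. exact H2.
Qed.
Lemma chasles4 (h : R -> R) a b c y1 y2 : is_RInt h a c y1 -> is_RInt h b c y2 -> is_RInt h a b (y1 - y2).
Proof.
  intros H1 H2. replace (y1 - y2) with (plus y1 (opp y2)) by (simpl; unfold plus, opp; simpl; ring).
  apply (is_RInt_Chasles (V:=R_NormedModule) h a c b). exact H1. apply is_RInt_swap. exact H2.
Qed.

Lemma RInt_lower (h : R -> R) t1 t2 y K : t1 <= t2 -> is_RInt h t1 t2 y ->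
  (forall t, t1 < t < t2 -> K <= h t) -> K * (t2 - t1) <= y.
Proof.
  intros H12 Hy Hk.
  assert (Hc := is_RInt_const t1 t2 K).
  assert (L := is_RInt_le (fun _ => K) h t1 t2 _ _ H12 Hc Hy Hk).
  change (scal (t2 - t1) K) with ((t2 - t1) * K) in L. lra.
Qed.

Lemma nlb_left (h : R -> R) a Fb : ProperFilter Fb -> ex_RInt_gen h (at_right a) Fb ->
  forall c d, 0 < c -> 0 < d -> (forall t, a < t < a + d -> c / (t - a) <= h t) -> False.
Proof.
  intros PF Hi c d Hc Hd Hb.
  destruct (gen_pair h _ _ Hi (c/4) ltac:(lra)) as [l [Q [Rr [HQ [HR HH]]]]].
  destruct (at_right_interval a Q HQ) as [d' [Hd' HQ']].
  destruct (filter_ex Rr HR) as [b0 Hb0].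
  set (u := Rmin d d' / 2).
  assert (Hu : 0 < u /\ u < d /\ u < d').
  { unfold u. assert (Rmin d d' <= d) by apply Rmin_l; assert (Rmin d d' <= d') by apply Rmin_r; assert (0 < Rmin d d') by (apply Rmin_glb_lt; lra); lra. }
  destruct (HH (a + u/2) b0) as [y1 [Hy1 E1]]. apply HQ'; lra. exact Hb0.
  destruct (HH (a + u) b0) as [y2 [Hy2 E2]]. apply HQ'; lra. exact Hb0.
  assert (H3 := chasles4 h _ _ _ _ _ Hy1 Hy2).
  assert (L := RInt_lower h (a+u/2) (a+u) _ (c/u) ltac:(lra) H3).
  assert (c / u * (a + u - (a + u / 2)) <= y1 - y2).
  { apply L. intros t Ht. eapply Rle_trans; [|apply Hb; lra].
    unfold Rdiv. apply Rmult_le_compat_l. lra. apply Rinv_le_contravar; lra. }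
  replace (c / u * (a + u - (a + u / 2))) with (c/2) in H by (field; lra).
  apply Rabs_def2 in E1. apply Rabs_def2 in E2. lra.
Qed.

Lemma nlb_right (h : R -> R) b Fa : ProperFilter Fa -> ex_RInt_gen h Fa (at_left b) ->
  forall c d, 0 < c -> 0 < d -> (forall t, b - d < t < b -> c / (b - t) <= h t) -> False.
Proof.
  intros PF Hi c d Hc Hd Hb.
  destruct (gen_pair h _ _ Hi (c/4) ltac:(lra)) as [l [Q [Rr [HQ [HR HH]]]]].
  destruct (at_left_interval b Rr HR) as [d' [Hd' HR']].
  destruct (filter_ex Q HQ) as [a0 Ha0].
  set (u := Rmin d d' / 2).
  assert (Hu : 0 < u /\ u < d /\ u < d').
  { unfold u. assert (Rmin d d' <= d) by apply Rmin_l; assert (Rmin d d' <= d') by apply Rmin_r; assert (0 < Rmin d d') by (apply Rmin_glb_lt; lra); lra. }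
  destruct (HH a0 (b - u)) as [y1 [Hy1 E1]]. exact Ha0. apply HR'; lra.
  destruct (HH a0 (b - u/2)) as [y2 [Hy2 E2]]. exact Ha0. apply HR'; lra.
  assert (H3 := chasles3 h _ _ _ _ _ Hy1 Hy2).
  assert (L := RInt_lower h (b-u) (b-u/2) _ (c/u) ltac:(lra) H3).
  assert (c / u * (b - u / 2 - (b - u)) <= y2 - y1).
  { apply L. intros t Ht. eapply Rle_trans; [|apply Hb; lra].
    unfold Rdiv. apply Rmult_le_compat_l. lra. apply Rinv_le_contravar; lra. }
  replace (c / u * (b - u / 2 - (b - u))) with (c/2) in H by (field; lra).
  apply Rabs_def2 in E1. apply Rabs_def2 in E2. lra.
Qed.

Lemma nlb_inf (h : R -> R) Fa : ProperFilter Fa -> ex_RInt_gen h Fa (Rbar_locally p_infty) ->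
  forall c M, 0 < c -> (forall t, M < t -> c <= h t) -> False.
Proof.
  intros PF Hi c M Hc Hb.
  destruct (gen_pair h _ _ Hi (c/4) ltac:(lra)) as [l [Q [Rr [HQ [HR HH]]]]].
  destruct (pinfty_interval Rr HR) as [M' HR'].
  destruct (filter_ex Q HQ) as [a0 Ha0].
  set (u := Rmax M M' + 1).
  assert (Hu : M < u /\ M' < u).
  { unfold u. assert (M <= Rmax M M') by apply Rmax_l; assert (M' <= Rmax M M') by apply Rmax_r; lra. }
  destruct (HH a0 u) as [y1 [Hy1 E1]]. exact Ha0. apply HR'; lra.
  destruct (HH a0 (u+1)) as [y2 [Hy2 E2]]. exact Ha0. apply HR'; lra.
  assert (H3 := chasles3 h _ _ _ _ _ Hy1 Hy2).
  assert (L := RInt_lower h u (u+1) _ c ltac:(lra) H3).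
  assert (c * (u + 1 - u) <= y2 - y1).
  { apply L. intros t Ht. apply Hb; lra. }
  apply Rabs_def2 in E1. apply Rabs_def2 in E2. lra.
Qed.

Lemma is_derive_Re (f : R -> C) (x : R) d : is_derive f x d -> is_derive (fun t => fst (f t)) x (fst d).
Proof.
  intros H. unfold is_derive in *.
  apply (filterdiff_comp' f (fun z : C => fst z) x _ (fun z : C => fst z) H).
  apply filterdiff_linear. apply (is_linear_fst (U:=R_NormedModule) (V:=R_NormedModule)).
Qed.
Lemma is_derive_Im (f : R -> C) (x : R) d : is_derive f x d -> is_derive (fun t => snd (f t)) x (snd d).
Proof.
  intros H. unfold is_derive in *.
  apply (filterdiff_comp' f (fun z : C => snd z) x _ (fun z : C => snd z) H).
  apply filterdiff_linear. apply (is_linear_snd (U:=R_NormedModule) (V:=R_NormedModule)).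
Qed.

Lemma Cmod_sq (z : C) : Cmod z ^ 2 = fst z ^ 2 + snd z ^ 2.
Proof. unfold Cmod. apply pow2_sqrt. nra. Qed.

Lemma ang_aux (N h : R -> R) (c th1 : R) :
  (forall t, 0 < t < PI -> is_derive N t (2 * (c / sin t - cos t / (2 * sin t)) * N t)) ->
  (forall t, 0 < t < PI -> 0 <= N t) ->
  0 < th1 < PI -> 0 < N th1 ->
  (1/2 <= c \/ c <= -1/2) ->
  ex_RInt_gen h (at_right 0) (at_left PI) ->
  (forall t, 0 < t < PI -> N t * sin t <= h t) -> False.
Proof.
  intros HD HN Hth HN1 Hc Hi Hh.
  assert (Hs : forall t, 0 < t < PI -> 0 < sin t) by (intros; apply sin_gt_0; lra).
  destruct Hc as [Hc|Hc].
  - (* (PI - t) N sin nondecreasing *)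
    set (phi := fun t => (PI - t) * (N t * sin t)).
    assert (Hm : forall t, th1 <= t < PI -> phi th1 <= phi t).
    { intros t Ht.
      apply (mono phi (fun t => N t * (2 * c * (PI - t) - sin t))). lra.
      - intros u Hu. unfold phi. eapply D_eq.
        apply D_mult. eapply D_eq. apply D_plus. apply D_const. apply D_opp, D_id. reflexivity.
        apply D_mult. apply HD; lra. apply is_derive_sin.
        assert (0 < sin u) by (apply Hs; lra). simpl. field. lra.
      - intros u Hu. apply Rmult_le_pos. apply HN; lra.
        assert (sin u = sin (PI - u)) by (rewrite sin_PI_x; auto).
        assert (sin (PI - u) < PI - u) by (apply sin_lt_x; lra).
        assert (0 <= (2*c-1)*(PI-u)) by (apply Rmult_le_pos; lra). lra. }
    apply (nlb_right h PI _ (at_right_proper_filter 0) Hi (phi th1) (PI - th1)).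
    + unfold phi. apply Rmult_lt_0_compat. lra. apply Rmult_lt_0_compat. lra. apply Hs; lra.
    + lra.
    + intros t Ht. eapply Rle_trans; [|apply Hh; lra].
      assert (phi th1 <= phi t) by (apply Hm; lra). unfold phi in *.
      apply (Rmult_le_reg_l (PI - t)). lra. unfold Rdiv. rewrite <- Rmult_assoc, (Rmult_comm (PI - t)), Rmult_assoc, Rinv_r; lra.
  - set (phi := fun t => t * (N t * sin t)).
    assert (Hm : forall t, 0 < t <= th1 -> phi th1 <= phi t).
    { intros t Ht.
      assert (- phi t <= - phi th1); [|lra].
      apply (mono (fun t => - phi t) (fun t => - (N t * (sin t + 2 * c * t)))). lra.
      - intros u Hu. unfold phi. apply D_opp. eapply D_eq.
        apply D_mult. apply D_id.
        apply D_mult. apply HD; lra. apply is_derive_sin.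
        assert (0 < sin u) by (apply Hs; lra). simpl. field. lra.
      - intros u Hu.
        assert (0 <= N u) by (apply HN; lra).
        assert (sin u < u) by (apply sin_lt_x; lra).
        assert (0 < sin u) by (apply Hs; lra).
        assert (0 <= (-1-2*c)*u) by (apply Rmult_le_pos; lra).
        assert (0 <= N u * (-(sin u + 2 * c * u))) by (apply Rmult_le_pos; lra). lra. }
    apply (nlb_left h 0 _ (at_left_proper_filter PI) Hi (phi th1) th1).
    + unfold phi. apply Rmult_lt_0_compat. lra. apply Rmult_lt_0_compat. lra. apply Hs; lra.
    + lra.
    + intros t Ht. eapply Rle_trans; [|apply Hh; lra].
      assert (phi th1 <= phi t) by (apply Hm; lra). unfold phi in *.
      apply (Rmult_le_reg_l t). lra. rewrite Rminus_0_r. unfold Rdiv. rewrite <- Rmult_assoc, (Rmult_comm t), Rmult_assoc, Rinv_r; lra.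
Qed.

Lemma ang_pair (p1 q1 p2 q2 a1 b1 a2 b2 th m k omega : R) : sin th <> 0 ->
  ((a1, b1) + RtoC ((cos th / sin th) / 2) * (p1, q1) - RtoC (Wpot 0 omega k th) * (p1, q1)
       + RtoC (- (0 * m * cos th) + 0) * (p2, q2) = 0)%C ->
  (RtoC (0 * m * cos th + 0) * (p1, q1)
       - (a2, b2) - RtoC ((cos th / sin th) / 2) * (p2, q2) - RtoC (Wpot 0 omega k th) * (p2, q2) = 0)%C ->
  a1 = (k / sin th - cos th / (2 * sin th)) * p1 /\ b1 = (k / sin th - cos th / (2 * sin th)) * q1 /\
  a2 = (- k / sin th - cos th / (2 * sin th)) * p2 /\ b2 = (- k / sin th - cos th / (2 * sin th)) * q2.
Proof.
  intros Hs H1 H2.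
  unfold Cminus, Cplus, Cmult, Copp, RtoC, Wpot in H1, H2. simpl in H1, H2.
  injection H1 as E1 E2. injection H2 as E3 E4.
  repeat split.
  - assert (a1 = (k / sin th) * p1 - (cos th / sin th / 2) * p1) as -> by lra. field; exact Hs.
  - assert (b1 = (k / sin th) * q1 - (cos th / sin th / 2) * q1) as -> by lra. field; exact Hs.
  - assert (a2 = - (k / sin th) * p2 - (cos th / sin th / 2) * p2) as -> by lra. field; exact Hs.
  - assert (b2 = - (k / sin th) * q2 - (cos th / sin th / 2) * q2) as -> by lra. field; exact Hs.
Qed.

Lemma half_int_bound (k : R) : half_integer k -> 1/2 <= k \/ k <= -1/2.
Proof.
  intros [z ->]. destruct (Z_lt_le_dec z 0) as [Hz|Hz].
  - right. assert (IZR z <= -1). { apply IZR_le. lia. } lra.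
  - left. assert (0 <= IZR z) by (apply IZR_le; exact Hz). lra.
Qed.

Lemma lambda_nonzero (m k omega : R) (g : R -> C * C) : half_integer k ->
  angular_solution 0 m k omega 0 g ->
  (exists th, 0 < th < PI /\ g th <> (RtoC 0, RtoC 0)) -> angular_L2 g -> False.
Proof.
  intros Hk Hsol [th1 [Hth1 Hne]] Hi.
  set (P1 := fun t => fst (fst (g t))). set (Q1 := fun t => snd (fst (g t))).
  set (P2 := fun t => fst (snd (g t))). set (Q2 := fun t => snd (snd (g t))).
  set (N1 := fun t => P1 t * P1 t + Q1 t * Q1 t).
  set (N2 := fun t => P2 t * P2 t + Q2 t * Q2 t).
  assert (Hs : forall t, 0 < t < PI -> 0 < sin t) by (intros; apply sin_gt_0; lra).
  assert (HD : forall t, 0 < t < PI ->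
    is_derive N1 t (2 * (k / sin t - cos t / (2 * sin t)) * N1 t) /\
    is_derive N2 t (2 * (- k / sin t - cos t / (2 * sin t)) * N2 t)).
  { intros t Ht. destruct (Hsol t Ht) as [d1 [d2 [D1 [D2 [E1 E2]]]]].
    assert (Hs' : sin t <> 0) by (specialize (Hs t Ht); lra).
    assert (DP1 := is_derive_Re _ _ _ D1). assert (DQ1 := is_derive_Im _ _ _ D1).
    assert (DP2 := is_derive_Re _ _ _ D2). assert (DQ2 := is_derive_Im _ _ _ D2).
    change (fun t => fst (fst (g t))) with P1 in DP1.
    change (fun t => snd (fst (g t))) with Q1 in DQ1.
    change (fun t => fst (snd (g t))) with P2 in DP2.
    change (fun t => snd (snd (g t))) with Q2 in DQ2.
    assert (Hg : g t = ((P1 t, Q1 t), (P2 t, Q2 t))).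
    { unfold P1, Q1, P2, Q2. destruct (g t) as [[? ?] [? ?]]; reflexivity. }
    rewrite Hg in E1, E2. simpl in E1, E2.
    destruct d1 as [a1 b1]. destruct d2 as [a2 b2]. simpl in DP1, DQ1, DP2, DQ2.
    destruct (ang_pair _ _ _ _ _ _ _ _ t m k omega Hs' E1 E2) as [Ea1 [Eb1 [Ea2 Eb2]]].
    split.
    - eapply D_eq. apply D_plus; apply D_mult; eauto.
      rewrite Ea1, Eb1. unfold N1. ring.
    - eapply D_eq. apply D_plus; apply D_mult; eauto.
      rewrite Ea2, Eb2. unfold N2. ring. }
  assert (HN1 : forall t, 0 <= N1 t) by (intros; unfold N1; nra).
  assert (HN2 : forall t, 0 <= N2 t) by (intros; unfold N2; nra).
  assert (Hh : forall t, normsq2 (g t) = N1 t + N2 t).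
  { intros t. unfold normsq2. rewrite !Cmod_sq. unfold N1, N2, P1, Q1, P2, Q2. ring. }
  assert (Hkb := half_int_bound k Hk).
  assert (Hnz : 0 < N1 th1 \/ 0 < N2 th1).
  { destruct (Rlt_or_le 0 (N1 th1)) as [?|H1]; [left; auto|].
    destruct (Rlt_or_le 0 (N2 th1)) as [?|H2]; [right; auto|].
    exfalso. apply Hne. unfold N1, N2 in *.
    assert (P1 th1 = 0) by nra. assert (Q1 th1 = 0) by nra.
    assert (P2 th1 = 0) by nra. assert (Q2 th1 = 0) by nra.
    unfold P1, Q1, P2, Q2 in *. destruct (g th1) as [[? ?] [? ?]]. simpl in *. subst. reflexivity. }
  destruct Hnz as [Hn|Hn].
  - apply (ang_aux N1 (fun t => normsq2 (g t) * sin t) k th1); auto.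
    + intros t Ht; apply HD; auto.
    + intros t Ht. rewrite Hh. specialize (Hs t Ht). specialize (HN2 t). nra.
  - apply (ang_aux N2 (fun t => normsq2 (g t) * sin t) (-k) th1); auto.
    + intros t Ht. eapply D_eq. apply HD; auto. unfold Rdiv. ring.
    + lra.
    + intros t Ht. rewrite Hh. specialize (Hs t Ht). specialize (HN1 t). nra.
Qed.

Definition U1 (f : R -> C * C) t := fst (fst (f t)).
Definition V1 (f : R -> C * C) t := snd (fst (f t)).
Definition U2 (f : R -> C * C) t := fst (snd (f t)).
Definition V2 (f : R -> C * C) t := snd (snd (f t)).
Definition Af f t := U1 f t * U1 f t + V1 f t * V1 f t + U2 f t * U2 f t + V2 f t * V2 f t.
Definition B1f f t := U1 f t * U2 f t + V1 f t * V2 f t.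
Definition B2f f t := V1 f t * U2 f t - U1 f t * V2 f t.

Lemma rad_pair (p1 q1 p2 q2 a1 b1 a2 b2 x sx mr l : R) : x <> 0 ->
  (RtoC x * (a1, b1) + Ci * RtoC sx * (p1, q1) + (Ci * RtoC mr - RtoC l) * (p2, q2) = 0)%C ->
  ((- (Ci * RtoC mr) - RtoC l) * (p1, q1) + RtoC x * (a2, b2) - Ci * RtoC sx * (p2, q2) = 0)%C ->
  a1 = (sx * q1 + mr * q2 + l * p2) / x /\ b1 = (- sx * p1 - mr * p2 + l * q2) / x /\
  a2 = (l * p1 - mr * q1 - sx * q2) / x /\ b2 = (mr * p1 + l * q1 + sx * p2) / x.
Proof.
  intros Hx H1 H2.
  unfold Cminus, Cplus, Cmult, Copp, RtoC, Ci in H1, H2. simpl in H1, H2.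
  injection H1 as E1 E2. injection H2 as E3 E4.
  repeat split; apply (Rmult_eq_reg_l x); auto; field_simplify; auto; lra.
Qed.

Lemma radial_reduce (rho Q m e k omega lambda : R) (f : R -> C * C) : 0 < rho ->
  radial_solution rho 0 Q m e k omega lambda f ->
  forall r, rho < r ->
   let s := Vpot 0 Q omega k e r / (r - rho) in
   is_derive (Af f) r ((4 * lambda * B1f f r - 4 * m * r * B2f f r) / (r - rho)) /\
   is_derive (B1f f) r ((lambda * Af f r + 2 * s * B2f f r) / (r - rho)) /\
   is_derive (B2f f) r ((- 2 * s * B1f f r - m * r * Af f r) / (r - rho)).
Proof.
  intros Hrho Hsol r Hr s.
  destruct (Hsol r Hr) as [d1 [d2 [D1 [D2 [E1 E2]]]]].
  assert (Hx : r - rho <> 0) by lra.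
  assert (DP1 := is_derive_Re _ _ _ D1). assert (DQ1 := is_derive_Im _ _ _ D1).
  assert (DP2 := is_derive_Re _ _ _ D2). assert (DQ2 := is_derive_Im _ _ _ D2).
  change (fun t => fst (fst (f t))) with (U1 f) in DP1.
  change (fun t => snd (fst (f t))) with (V1 f) in DQ1.
  change (fun t => fst (snd (f t))) with (U2 f) in DP2.
  change (fun t => snd (snd (f t))) with (V2 f) in DQ2.
  assert (Hg : f r = ((U1 f r, V1 f r), (U2 f r, V2 f r))).
  { unfold U1, V1, U2, V2. destruct (f r) as [[? ?] [? ?]]; reflexivity. }
  cbv zeta in E1, E2. fold s in E1, E2.
  rewrite Hg in E1, E2. simpl in E1, E2.
  destruct d1 as [a1 b1]. destruct d2 as [a2 b2]. simpl in DP1, DQ1, DP2, DQ2.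
  destruct (rad_pair _ _ _ _ _ _ _ _ _ _ _ _ Hx E1 E2) as [Ea1 [Eb1 [Ea2 Eb2]]].
  unfold Af, B1f, B2f.
  split; [|split].
  - eapply D_eq. apply D_plus; [apply D_plus; [apply D_plus|]|]; apply D_mult; eauto.
    rewrite Ea1, Eb1, Ea2, Eb2. field. exact Hx.
  - eapply D_eq. apply D_plus; apply D_mult; eauto.
    rewrite Ea1, Eb1, Ea2, Eb2. field. exact Hx.
  - eapply D_eq. apply (D_plus _ (fun t => - (U1 f t * V2 f t))). apply D_mult; eauto. apply D_opp. apply D_mult; eauto.
    rewrite Ea1, Eb1, Ea2, Eb2. field. exact Hx.
Qed.

Lemma Bbnd (A b1 b2 : R) : 0 <= A -> b1 * b1 + b2 * b2 <= A * A / 4 -> Rabs b1 <= A / 2 /\ Rabs b2 <= A / 2.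
Proof. intros HA HB. split; apply Rabs_le; split; nra. Qed.

Lemma pb (a b al be : R) : Rabs a <= al -> Rabs b <= be -> - (al * be) <= a * b <= al * be.
Proof.
  intros Ha Hb. assert (H : Rabs (a * b) <= al * be).
  { rewrite Rabs_mult. apply Rmult_le_compat; auto using Rabs_pos. }
  pose proof (Rle_abs (a*b)); pose proof (Rabs_maj2 (a*b)); lra.
Qed.

Lemma exp_le (x y : R) : x <= y -> exp x <= exp y.
Proof. intros H. destruct (Rle_lt_or_eq_dec _ _ H) as [H1|H1]. apply Rlt_le, exp_increasing, H1. rewrite H1; lra. Qed.

Lemma deriv_zero (g : R -> R) (rho r l : R) : rho < r -> (forall t, rho < t -> g t = 0) ->
  is_derive g r l -> l = 0.
Proof.
  intros Hr Hg Hd.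
  assert (Hl : locally r (fun t => g t = (fun _ : R => 0) t)).
  { exists (mkposreal (r - rho) ltac:(lra)). intros t Ht.
    unfold ball in Ht; simpl in Ht; unfold AbsRing_ball, abs, minus, plus, opp in Ht; simpl in Ht.
    apply Rabs_def2 in Ht. apply Hg. lra. }
  assert (H1 := is_derive_ext_loc _ _ _ _ Hl Hd).
  assert (H2 := D_const 0 r).
  apply is_derive_unique in H1. apply is_derive_unique in H2. congruence.
Qed.

Section Core.
Variables (rho m lambda : R) (A : R -> R).
Hypothesis Hrho : 0 < rho.
Hypothesis HA : forall r, rho < r -> 0 <= A r.
Hypothesis NLB0 : forall c d, 0 < c -> 0 < d -> (forall r, rho < r < rho + d -> c <= A r) -> False.
Hypothesis NLBI : forall c M, 0 < c -> (forall r, M < r -> c <= A r) -> False.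

Lemma gen_zero (g dg : R -> R) (C : R) : 0 < C ->
  (forall r, rho < r -> is_derive g r (dg r)) ->
  (forall r, rho < r -> 0 <= dg r) ->
  (forall r, rho < r -> - (C * A r) <= g r <= C * A r) ->
  forall r, rho < r -> g r = 0.
Proof.
  intros HC Hd Hp Hb r Hr.
  destruct (Rtotal_order (g r) 0) as [Hn|[Hz|Hpos]]; auto; exfalso.
  - apply (NLB0 (- g r / C) (r - rho)).
    + apply Rdiv_lt_0_compat; lra.
    + lra.
    + intros t Ht. assert (g t <= g r).
      { apply (mono g dg t r). lra. intros; apply Hd; lra. intros; apply Hp; lra. }
      specialize (Hb t ltac:(lra)).
      apply (Rmult_le_reg_l C). lra. unfold Rdiv. 
      replace (C * (- g r * / C)) with (- g r) by (field; lra). lra.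
  - apply (NLBI (g r / C) r).
    + apply Rdiv_lt_0_compat; lra.
    + intros t Ht. assert (g r <= g t).
      { apply (mono g dg r t). lra. intros; apply Hd; lra. intros; apply Hp; lra. }
      specialize (Hb t ltac:(lra)).
      apply (Rmult_le_reg_l C). lra. unfold Rdiv. 
      replace (C * (g r * / C)) with (g r) by (field; lra). lra.
Qed.
End Core.

Section Core2.
Variables (rho m lambda omega E : R) (A B1 B2 : R -> R) (r1 : R).
Definition sfun r := (omega * r * r + E * r) / (r - rho).
Hypothesis Hrho : 0 < rho.
Hypothesis Hm : 0 < m.
Hypothesis Hl : lambda <> 0.
Hypothesis HD : forall r, rho < r ->
  is_derive A r ((4 * lambda * B1 r - 4 * m * r * B2 r) / (r - rho)) /\
  is_derive B1 r ((lambda * A r + 2 * sfun r * B2 r) / (r - rho)) /\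
  is_derive B2 r ((- 2 * sfun r * B1 r - m * r * A r) / (r - rho)).
Hypothesis HA : forall r, rho < r -> 0 <= A r.
Hypothesis HB : forall r, rho < r -> B1 r * B1 r + B2 r * B2 r <= A r * A r / 4.
Hypothesis Hr1 : rho < r1.
Hypothesis HA1 : 0 < A r1.
Hypothesis NLB0 : forall c d, 0 < c -> 0 < d -> (forall r, rho < r < rho + d -> c <= A r) -> False.
Hypothesis NLBI : forall c M, 0 < c -> (forall r, M < r -> c <= A r) -> False.

Lemma dA_bound r : rho < r -> 
  - ((2 * Rabs lambda + 2 * m * r) * A r) <= 4 * lambda * B1 r - 4 * m * r * B2 r <= (2 * Rabs lambda + 2 * m * r) * A r.
Proof.
  intros Hr. destruct (Bbnd _ _ _ (HA r Hr) (HB r Hr)) as [H1 H2].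
  assert (P1 := pb lambda (B1 r) (Rabs lambda) (A r / 2) (Rle_refl _) H1).
  assert (Hmr : Rabs (m * r) <= m * r) by (rewrite Rabs_pos_eq; nra).
  assert (P2 := pb (m * r) (B2 r) (m * r) (A r / 2) Hmr H2).
  lra.
Qed.

Lemma coef_mono a b t : rho < a -> a <= t <= b -> 0 <= A t ->
  (2 * Rabs lambda + 2 * m * t) * A t / (t - rho) <= (2 * Rabs lambda + 2 * m * b) * A t / (a - rho).
Proof.
  intros Ha Ht HAt. unfold Rdiv.
  rewrite Rmult_assoc, (Rmult_assoc (2 * Rabs lambda + 2 * m * b)).
  apply Rmult_le_compat. 
  - pose proof (Rabs_pos lambda). nra.
  - apply Rmult_le_pos. auto. apply Rlt_le, Rinv_0_lt_compat. lra.
  - nra.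
  - apply Rmult_le_compat_l. auto. apply Rinv_le_contravar; lra.
Qed.

Lemma propagate r : rho < r -> 0 < A r.
Proof.
  intros Hr. destruct (Rtotal_order r1 r) as [H|[H|H]].
  - set (C := (2 * Rabs lambda + 2 * m * r) / (r1 - rho)).
    assert (G := grow_fwd A (fun t => (4 * lambda * B1 t - 4 * m * t * B2 t) / (t - rho)) r1 r C ltac:(lra)).
    assert (A r1 * exp (C * (r1 - r)) <= A r).
    { apply G. intros t Ht. apply HD; lra.
      intros t Ht. assert (Ht' : rho < t) by lra. destruct (dA_bound t Ht') as [L1 L2].
      assert (K := coef_mono r1 r t Hr1 Ht (HA t Ht')).
      assert (- ((2 * Rabs lambda + 2 * m * t) * A t) / (t - rho) <= (4 * lambda * B1 t - 4 * m * t * B2 t) / (t - rho)).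
      { unfold Rdiv. apply Rmult_le_compat_r. apply Rlt_le, Rinv_0_lt_compat. lra. exact L1. }
      unfold C. unfold Rdiv in *. lra. }
    assert (0 < A r1 * exp (C * (r1 - r))) by (apply Rmult_lt_0_compat; auto; apply exp_pos). lra.
  - subst; auto.
  - set (C := (2 * Rabs lambda + 2 * m * r1) / (r - rho)).
    assert (G := grow_bwd A (fun t => (4 * lambda * B1 t - 4 * m * t * B2 t) / (t - rho)) r r1 C ltac:(lra)).
    assert (A r1 * exp (C * (r - r1)) <= A r).
    { apply G. intros t Ht. apply HD; lra.
      intros t Ht. assert (Ht' : rho < t) by lra. destruct (dA_bound t Ht') as [L1 L2].
      assert (K := coef_mono r r1 t Hr Ht (HA t Ht')).
      assert ((4 * lambda * B1 t - 4 * m * t * B2 t) / (t - rho) <= ((2 * Rabs lambda + 2 * m * t) * A t) / (t - rho)).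
      { unfold Rdiv. apply Rmult_le_compat_r. apply Rlt_le, Rinv_0_lt_compat. lra. exact L2. }
      unfold C. unfold Rdiv in *. lra. }
    assert (0 < A r1 * exp (C * (r - r1))) by (apply Rmult_lt_0_compat; auto; apply exp_pos). lra.
Qed.


Lemma Babs r : rho < r -> Rabs (B1 r) <= A r / 2 /\ Rabs (B2 r) <= A r / 2.
Proof. intros Hr. apply Bbnd; auto. Qed.

Lemma Aabs r : rho < r -> Rabs (A r) <= A r.
Proof. intros Hr. rewrite Rabs_pos_eq; auto. lra. Qed.

Section V0zero.
Hypothesis HV0 : omega * rho * rho + E * rho = 0.

Lemma s_eq0 r : rho < r -> sfun r = omega * r.
Proof.
  intros Hr. unfold sfun. assert (E = - omega * rho) as ->.
  { apply (Rmult_eq_reg_r rho). lra. lra. }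
  field. lra.
Qed.

Definition Hf r := 2 * m * B1 r + omega * A r.
Definition Kf r := m * A r + 2 * omega * B1 r.

Lemma dH r : rho < r -> is_derive Hf r (2 * lambda * Kf r / (r - rho)).
Proof.
  intros Hr. destruct (HD r Hr) as [DA [DB1 DB2]].
  unfold Hf, Kf. eapply D_eq. apply D_plus. apply D_scal. exact DB1. apply D_scal. exact DA.
  rewrite (s_eq0 r Hr). field. lra.
Qed.

Lemma small_omega : Rabs omega <= m -> False.
Proof.
  intros Hom.
  assert (HK : forall r, rho < r -> (m - Rabs omega) * A r <= Kf r).
  { intros r Hr. destruct (Babs r Hr) as [H1 H2].
    assert (P := pb omega (B1 r) (Rabs omega) (A r / 2) (Rle_refl _) H1). unfold Kf. lra. }
  assert (HHb : forall r, rho < r -> - ((m + Rabs omega) * A r) <= Hf r <= (m + Rabs omega) * A r).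
  { intros r Hr. destruct (Babs r Hr) as [H1 H2].
    assert (Hmm : Rabs m <= m) by (rewrite Rabs_pos_eq; lra).
    assert (P1 := pb m (B1 r) m (A r / 2) Hmm H1).
    assert (P2 := pb omega (A r) (Rabs omega) (A r) (Rle_refl _) (Aabs r Hr)). unfold Hf. lra. }
  assert (Hpos : 0 < m + Rabs omega) by (pose proof (Rabs_pos omega); lra).
  assert (HK0 : forall r, rho < r -> Kf r = 0).
  { intros r Hr.
    assert (Hx : 0 < r - rho) by lra.
    destruct (Rlt_or_le 0 lambda) as [Hlp|Hln].
    - assert (Z := gen_zero rho A NLB0 NLBI Hf (fun r => 2 * lambda * Kf r / (r - rho)) _ Hpos dH).
      assert (Z' : forall r, rho < r -> Hf r = 0).
      { apply Z. intros t Ht. specialize (HK t Ht). specialize (HA t Ht).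
        apply Rmult_le_pos; [|apply Rlt_le, Rinv_0_lt_compat; lra].
        assert (0 <= (m - Rabs omega) * A t) by (apply Rmult_le_pos; lra). nra.
        exact HHb. }
      assert (D0 := deriv_zero Hf rho r _ Hr Z' (dH r Hr)).
      unfold Rdiv in D0. apply Rmult_integral in D0. destruct D0 as [D0|D0].
      + apply Rmult_integral in D0. destruct D0 as [D0|D0]; auto. lra.
      + exfalso. apply Rinv_neq_0_compat in D0; auto. lra.
    - assert (Hln' : lambda < 0) by lra.
      assert (Z := gen_zero rho A NLB0 NLBI (fun r => - Hf r) (fun r => - (2 * lambda * Kf r / (r - rho))) _ Hpos
                (fun r Hr => D_opp _ _ _ (dH r Hr))).
      assert (Z' : forall r, rho < r -> - Hf r = 0).
      { apply Z. intros t Ht. specialize (HK t Ht). specialize (HA t Ht).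
        assert (0 <= (m - Rabs omega) * A t) by (apply Rmult_le_pos; lra).
        assert (0 <= Kf t) by lra.
        unfold Rdiv. assert (0 < / (t - rho)) by (apply Rinv_0_lt_compat; lra).
        assert (0 <= (- lambda) * Kf t) by (apply Rmult_le_pos; lra).
        assert (0 <= (- lambda) * Kf t * / (t - rho)) by (apply Rmult_le_pos; lra). nra.
        intros t Ht; specialize (HHb t Ht); lra. }
      assert (Z'' : forall r, rho < r -> Hf r = 0) by (intros t Ht; specialize (Z' t Ht); lra).
      assert (D0 := deriv_zero Hf rho r _ Hr Z'' (dH r Hr)).
      unfold Rdiv in D0. apply Rmult_integral in D0. destruct D0 as [D0|D0].
      + apply Rmult_integral in D0. destruct D0 as [D0|D0]; auto. lra.
      + exfalso. apply Rinv_neq_0_compat in D0; auto. lra. }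
  destruct (Rle_lt_or_eq_dec _ _ Hom) as [Hlt|Heq].
  - specialize (HK r1 Hr1). rewrite (HK0 r1 Hr1) in HK.
    assert (0 < (m - Rabs omega) * A r1) by (apply Rmult_lt_0_compat; lra). lra.
  - assert (Hsq : omega * omega = m * m).
    { rewrite <- Heq. unfold Rabs. destruct (Rcase_abs omega); ring. }
    assert (HB1 : forall r, rho < r -> B1 r = - omega * A r / (2 * m)).
    { intros r Hr. specialize (HK0 r Hr). unfold Kf in HK0.
      apply (Rmult_eq_reg_l (2 * m * m)); [|nra].
      replace (2 * m * m * B1 r) with (2 * (omega * omega) * B1 r) by (rewrite Hsq; ring).
      replace (2 * m * m * (- omega * A r / (2 * m))) with (- m * omega * A r) by (field; lra).
      assert (omega * (m * A r + 2 * omega * B1 r) = 0) by (rewrite HK0; ring). lra. }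
    assert (HB2 : forall r, rho < r -> B2 r = 0).
    { intros r Hr. specialize (HB r Hr). rewrite (HB1 r Hr) in HB.
      assert (E1 : - omega * A r / (2 * m) * (- omega * A r / (2 * m)) = A r * A r / 4).
      { replace (- omega * A r / (2 * m) * (- omega * A r / (2 * m))) with (omega * omega * (A r * A r) / (4 * (m * m))) by (field; lra).
        rewrite Hsq. field. lra. }
      rewrite E1 in HB. nra. }
    set (mu := - 2 * lambda * omega / m).
    assert (HdA : forall r, rho < r -> is_derive A r (mu * A r / (r - rho))).
    { intros r Hr. eapply D_eq. apply (HD r Hr). rewrite (HB1 r Hr), (HB2 r Hr). unfold mu. field. lra. }
    assert (Hone : 0 < 1) by lra.
    destruct (Rle_or_lt 0 mu) as [Hmu|Hmu].
    + assert (Z := gen_zero rho A NLB0 NLBI A (fun r => mu * A r / (r - rho)) 1 Hone HdA).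
      assert (Z1 : A r1 = 0).
      { apply Z; auto. intros t Ht. unfold Rdiv. apply Rmult_le_pos. apply Rmult_le_pos; auto.
        apply Rlt_le, Rinv_0_lt_compat; lra.
        intros t Ht; specialize (HA t Ht); lra. }
      lra.
    + assert (Z := gen_zero rho A NLB0 NLBI (fun r => - A r) (fun r => - (mu * A r / (r - rho))) 1 Hone
              (fun r Hr => D_opp _ _ _ (HdA r Hr))).
      assert (Z1 : - A r1 = 0).
      { apply Z; auto. intros t Ht. unfold Rdiv.
        assert (0 <= (- mu) * A t * / (t - rho)). { apply Rmult_le_pos. apply Rmult_le_pos; auto. lra.
        apply Rlt_le, Rinv_0_lt_compat; lra. } lra.
        intros t Ht; specialize (HA t Ht); lra. }
      lra.
Qed.

Definition Ft r := omega * Hf r + 2 * omega * lambda * (B2 r * / r).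

Lemma dFt r : rho < r -> is_derive Ft r (- 2 * omega * lambda * B2 r / (r * r)).
Proof.
  intros Hr. destruct (HD r Hr) as [DA [DB1 DB2]].
  unfold Ft. eapply D_eq. apply D_plus. apply D_scal. apply (dH r Hr).
  apply D_scal. apply D_mult. exact DB2. apply is_derive_inv. apply D_id. lra.
  rewrite (s_eq0 r Hr). unfold Kf. field. split; lra.
Qed.

Lemma large_omega : m < Rabs omega -> False.
Proof.
  intros Hom.
  set (Dd := omega * omega - m * Rabs omega).
  assert (Hsq : omega * omega = Rabs omega * Rabs omega).
  { unfold Rabs. destruct (Rcase_abs omega); ring. }
  assert (HDd : 0 < Dd). { unfold Dd. rewrite Hsq. nra. }
  set (W := Rabs omega * Rabs lambda).
  assert (HW : 0 <= W) by (unfold W; apply Rmult_le_pos; apply Rabs_pos).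
  set (r0 := Rmax (rho + 1) (2 * W / Dd)).
  assert (Hr0a : rho + 1 <= r0) by apply Rmax_l.
  assert (Hr0b : 2 * W / Dd <= r0) by apply Rmax_r.
  set (Cu := m * Rabs omega + omega * omega + W).
  assert (Bnd : forall r, r0 <= r -> Dd * A r / 2 <= Ft r <= Cu * A r /\ - W * A r / (r * r) <= - 2 * omega * lambda * B2 r / (r * r)).
  { intros r Hr. assert (Hr' : rho < r) by lra.
    destruct (Babs r Hr') as [H1 H2].
    assert (HAr := HA r Hr').
    assert (P1 := pb omega (B1 r) (Rabs omega) (A r / 2) (Rle_refl _) H1).
    assert (Hol : Rabs (omega * lambda) <= W) by (unfold W; rewrite Rabs_mult; lra).
    assert (P2 := pb (omega * lambda) (B2 r) W (A r / 2) Hol H2).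
    assert (Hir : 0 < / r) by (apply Rinv_0_lt_compat; lra).
    assert (Hir1 : r * / r = 1) by (field; lra).
    assert (Hir2 : / r <= 1) by (rewrite <- Rinv_1; apply Rinv_le_contravar; lra).
    assert (HWr : W * / r <= Dd / 2).
    { apply (Rmult_le_reg_r r). lra. rewrite Rmult_assoc, (Rmult_comm (/ r)), Hir1.
      unfold Rdiv in Hr0b. 
      assert (2 * W * / Dd * Dd = 2 * W) by (field; lra). nra. }
    assert (T1 : - (W * A r) * / r <= 2 * (omega * lambda * B2 r) * / r <= W * A r * / r).
    { split; apply Rmult_le_compat_r; lra. }
    assert (T2 : W * A r * / r <= Dd / 2 * A r).
    { replace (W * A r * / r) with (W * / r * A r) by ring. apply Rmult_le_compat_r; lra. }
    assert (T3 : W * A r * / r <= W * A r).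
    { replace (W * A r * / r) with (W * A r * / r) by ring.
      assert (0 <= W * A r) by (apply Rmult_le_pos; lra). nra. }
    assert (M1 : - (m * (Rabs omega * (A r / 2))) <= m * (omega * B1 r) <= m * (Rabs omega * (A r / 2))).
    { rewrite Ropp_mult_distr_r. split; apply Rmult_le_compat_l; lra. }
    unfold Ft, Hf, Cu. split; [split|].
    - replace (2 * omega * lambda * (B2 r * / r)) with (2 * (omega * lambda * B2 r) * / r) by ring.
      assert (Dd * A r = omega*omega*A r - m*Rabs omega*A r) by (unfold Dd; ring). lra.
    - replace (2 * omega * lambda * (B2 r * / r)) with (2 * (omega * lambda * B2 r) * / r) by ring.
      lra.
    - unfold Rdiv. apply Rmult_le_compat_r. 
      assert (0 < r * r) by nra. apply Rlt_le, Rinv_0_lt_compat; lra. lra. }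
  set (K := 2 * W / Dd).
  assert (HK : 0 <= K) by (unfold K; apply Rmult_le_pos; [lra|apply Rlt_le, Rinv_0_lt_compat; lra]).
  assert (Hr0p : 0 < r0) by lra.
  assert (HAr0 := propagate r0 ltac:(lra)).
  assert (HFr0 : 0 < Ft r0).
  { destruct (Bnd r0 (Rle_refl _)) as [[L _] _]. assert (0 < Dd * A r0 / 2) by (apply Rmult_lt_0_compat; [apply Rmult_lt_0_compat|]; lra). lra. }
  assert (HCu : 0 < Cu).
  { unfold Cu. assert (0 <= m * Rabs omega) by (apply Rmult_le_pos; [lra|apply Rabs_pos]). nra. }
  apply (NLBI (Ft r0 * exp (- K / r0) / Cu) r0).
  - apply Rdiv_lt_0_compat; auto. apply Rmult_lt_0_compat; auto. apply exp_pos.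
  - intros r Hr.
    assert (G := grow_inf Ft (fun r => - 2 * omega * lambda * B2 r / (r * r)) r0 r K Hr0p ltac:(lra)).
    assert (G' : Ft r0 * exp (- K / r0) <= Ft r * exp (- K / r)).
    { apply G. intros t Ht. apply dFt; lra.
      intros t Ht. destruct (Bnd t ltac:(lra)) as [[L1 L2] L3].
      eapply Rle_trans; [|exact L3].
      unfold K. unfold Rdiv.
      assert (0 < / (t * t)) by (apply Rinv_0_lt_compat; nra).
      assert (A t <= 2 * Ft t * / Dd).
      { apply (Rmult_le_reg_r Dd). lra. replace (2 * Ft t * / Dd * Dd) with (2 * Ft t) by (field; lra). lra. }
      assert (W * A t <= W * (2 * Ft t * / Dd)) by (apply Rmult_le_compat_l; lra).
      assert (- (2 * W * / Dd) * Ft t = - (W * (2 * Ft t * / Dd))) by ring.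
      nra. }
    destruct (Bnd r ltac:(lra)) as [[L1 L2] _].
    assert (Hex : exp (- K / r) <= 1).
    { rewrite <- exp_0. apply exp_le. unfold Rdiv. assert (0 < / r) by (apply Rinv_0_lt_compat; lra). nra. }
    assert (HFr : 0 <= Ft r).
    { assert (0 <= Dd * A r / 2) by (assert (0 <= A r) by (apply HA; lra); apply Rmult_le_pos; [apply Rmult_le_pos|]; lra). lra. }
    assert (Ft r * exp (- K / r) <= Ft r) by (assert (0 < exp (- K / r)) by apply exp_pos; nra).
    apply (Rmult_le_reg_l Cu). lra. unfold Rdiv. 
    replace (Cu * (Ft r0 * exp (- K * / r0) * / Cu)) with (Ft r0 * exp (- K * / r0)) by (field; lra).
    unfold Rdiv in G'. lra.
Qed.

End V0zero.


Definition Vf r := omega * r * r + E * r.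
Definition Gf r := Vf r * A r + (r - rho) * (2 * lambda * B2 r + 2 * m * r * B1 r).
Definition dGf r := (2 * omega * r + E) * A r + 2 * lambda * B2 r + 2 * m * (2 * r - rho) * B1 r.

Lemma dVf r : is_derive Vf r (2 * omega * r + E).
Proof.
  unfold Vf. eapply D_eq. apply (D_plus (fun t => omega * t * t) (fun t => E * t)).
  apply (D_mult (fun t => omega * t) (fun t => t)). apply D_scal, D_id. apply D_id.
  apply D_scal, D_id. ring.
Qed.

Lemma dG r : rho < r -> is_derive Gf r (dGf r).
Proof.
  intros Hr. destruct (HD r Hr) as [DA [DB1 DB2]].
  unfold Gf. eapply D_eq. apply D_plus. apply D_mult. apply dVf. exact DA.
  apply (D_mult (fun t => t - rho)). eapply D_eq. apply (D_plus (fun t => t) (fun _ => - rho)). apply D_id. apply D_const. reflexivity.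
  apply D_plus. apply D_scal. exact DB2. apply (D_mult (fun t => 2 * m * t)). apply D_scal, D_id. exact DB1.
  unfold dGf, sfun, Vf. field. lra.
Qed.

Lemma V0_nonzero : omega * rho * rho + E * rho <> 0 -> False.
Proof.
  intros HV.
  set (V0 := omega * rho * rho + E * rho) in *.
  set (aV := Rabs V0).
  assert (HaV : 0 < aV) by (unfold aV; apply Rabs_pos_lt; exact HV).
  assert (HaV2 : V0 * V0 = aV * aV) by (unfold aV; unfold Rabs; destruct (Rcase_abs V0); ring).
  set (L := Rabs omega * (2 * rho + 1) + Rabs E).
  set (P := Rabs lambda + m * (rho + 1)).
  set (Z := 2 * Rabs omega * (rho + 1) + Rabs E + Rabs lambda + m * (rho + 2)).
  assert (HL : 0 <= L) by (unfold L; pose proof (Rabs_pos omega); pose proof (Rabs_pos E); nra).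
  assert (HP : 0 < P) by (unfold P; pose proof (Rabs_pos lambda); nra).
  assert (HZ : 0 <= Z) by (unfold Z; pose proof (Rabs_pos omega); pose proof (Rabs_pos E); pose proof (Rabs_pos lambda); nra).
  set (d0 := Rmin 1 (aV / (2 * (L + P)))).
  assert (Hd0a : d0 <= 1) by apply Rmin_l.
  assert (Hd0b : d0 <= aV / (2 * (L + P))) by apply Rmin_r.
  assert (Hd0 : 0 < d0) by (apply Rmin_glb_lt; [lra|apply Rdiv_lt_0_compat; lra]).
  assert (Hd0c : d0 * (L + P) <= aV / 2).
  { apply (Rmult_le_compat_r (L + P)) in Hd0b; [|lra].
    replace (aV / (2 * (L + P)) * (L + P)) with (aV / 2) in Hd0b by (field; lra). exact Hd0b. }
  set (Gt := fun r => V0 * Gf r).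
  assert (Bnd : forall r, rho < r <= rho + d0 ->
     V0 * V0 * A r / 2 <= Gt r <= 3 * (V0 * V0) * A r / 2 /\ V0 * dGf r <= aV * Z * A r).
  { intros r Hr. assert (Hr' : rho < r) by lra. set (x := r - rho).
    destruct (Babs r Hr') as [H1 H2]. assert (HAr := HA r Hr').
    set (y := omega * (r + rho) + E).
    assert (Hy : Rabs y <= L).
    { unfold y, L. eapply Rle_trans. apply Rabs_triang. rewrite Rabs_mult.
      rewrite (Rabs_pos_eq (r + rho)) by lra.
      assert (Rabs omega * (r + rho) <= Rabs omega * (2 * rho + 1)) by (apply Rmult_le_compat_l; [apply Rabs_pos|lra]). lra. }
    set (T := 2 * lambda * B2 r + 2 * m * r * B1 r).
    assert (HT : - (P * A r) <= T <= P * A r).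
    { assert (Q1 := pb lambda (B2 r) (Rabs lambda) (A r / 2) (Rle_refl _) H2).
      assert (Hmr : Rabs (m * r) <= m * (rho + 1)) by (rewrite Rabs_pos_eq; nra).
      assert (Q2 := pb (m * r) (B1 r) (m * (rho + 1)) (A r / 2) Hmr H1). unfold T, P. lra. }
    assert (HT' : Rabs T <= P * A r) by (apply Rabs_le; lra).
    assert (HV0a : Rabs V0 <= aV) by (unfold aV; lra).
    assert (Q3 := pb V0 y aV L HV0a Hy).
    assert (Q4 := pb V0 T aV (P * A r) HV0a HT').
    assert (Q5 : - (aV * L * A r) <= V0 * y * A r <= aV * L * A r).
    { split; [rewrite Ropp_mult_distr_l|]; apply Rmult_le_compat_r; lra. }
    assert (HGt : Gt r = V0 * V0 * A r + x * (V0 * y * A r + V0 * T)).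
    { unfold Gt, Gf, Vf, x, y, T, V0. ring. }
    assert (Hx : 0 < x <= d0) by (unfold x; lra).
    assert (W1 : - (x * (aV * (L + P) * A r)) <= x * (V0 * y * A r + V0 * T) <= x * (aV * (L + P) * A r)).
    { rewrite Ropp_mult_distr_r. split; apply Rmult_le_compat_l; lra. }
    assert (W2 : x * (aV * (L + P) * A r) <= aV / 2 * (aV * A r)).
    { replace (x * (aV * (L + P) * A r)) with (x * (L + P) * (aV * A r)) by ring.
      apply Rmult_le_compat_r. apply Rmult_le_pos; lra.
      assert (x * (L + P) <= d0 * (L + P)) by (apply Rmult_le_compat_r; lra). lra. }
    split; [split|].
    - rewrite HGt. rewrite HaV2 in *. lra.
    - rewrite HGt. rewrite HaV2 in *. lra.
    - unfold dGf.
      assert (Hc : Rabs (2 * omega * r + E) <= 2 * Rabs omega * (rho + 1) + Rabs E).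
      { eapply Rle_trans. apply Rabs_triang. rewrite Rabs_mult, Rabs_mult, (Rabs_pos_eq 2) by lra.
        rewrite (Rabs_pos_eq r) by lra.
        assert (2 * Rabs omega * r <= 2 * Rabs omega * (rho + 1)) by (apply Rmult_le_compat_l; [pose proof (Rabs_pos omega); lra|lra]). lra. }
      assert (Q6 := pb (2 * omega * r + E) (A r) _ _ Hc (Aabs r Hr')).
      assert (Q7 := pb lambda (B2 r) (Rabs lambda) (A r / 2) (Rle_refl _) H2).
      assert (Hm2 : Rabs (m * (2 * r - rho)) <= m * (rho + 2)) by (rewrite Rabs_pos_eq; nra).
      assert (Q8 := pb (m * (2 * r - rho)) (B1 r) (m * (rho + 2)) (A r / 2) Hm2 H1).
      set (D := (2 * omega * r + E) * A r + 2 * lambda * B2 r + 2 * m * (2 * r - rho) * B1 r).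
      assert (HD' : Rabs D <= Z * A r). { apply Rabs_le. unfold D, Z. lra. }
      assert (Q9 := pb V0 D aV (Z * A r) HV0a HD'). lra. }
  set (C := 2 * Z / aV).
  assert (HC : 0 <= C) by (unfold C; apply Rmult_le_pos; [lra|apply Rlt_le, Rinv_0_lt_compat; lra]).
  set (r0 := rho + d0).
  assert (HAr0 := propagate r0 ltac:(unfold r0; lra)).
  assert (HG0 : 0 < Gt r0).
  { destruct (Bnd r0 ltac:(unfold r0; lra)) as [[L1 _] _].
    assert (0 < V0 * V0 * A r0 / 2). { rewrite HaV2. apply Rmult_lt_0_compat; [apply Rmult_lt_0_compat; [nra|lra]|lra]. } lra. }
  apply (NLB0 (Gt r0 * exp (- C) / (3 * (V0 * V0) / 2)) d0).
  - apply Rdiv_lt_0_compat. apply Rmult_lt_0_compat; auto; apply exp_pos. rewrite HaV2. nra.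
  - exact Hd0.
  - intros r Hr.
    assert (G := grow_bwd Gt (fun t => V0 * dGf t) r r0 C ltac:(unfold r0; lra)).
    assert (G' : Gt r0 * exp (C * (r - r0)) <= Gt r).
    { apply G. intros t Ht. apply D_scal. apply dG. lra.
      intros t Ht. destruct (Bnd t ltac:(unfold r0 in Ht; lra)) as [[L1 L2] L3].
      eapply Rle_trans; [exact L3|]. unfold C.
      assert (A t <= 2 * Gt t / (aV * aV)).
      { apply (Rmult_le_reg_r (aV * aV)). nra. replace (2 * Gt t / (aV * aV) * (aV * aV)) with (2 * Gt t) by (field; lra).
        rewrite HaV2 in L1. lra. }
      assert (aV * Z * A t <= aV * Z * (2 * Gt t / (aV * aV))) by (apply Rmult_le_compat_l; [apply Rmult_le_pos|]; lra).
      replace (2 * Z / aV * Gt t) with (aV * Z * (2 * Gt t / (aV * aV))) by (field; lra). lra. }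
    assert (Hex : exp (- C) <= exp (C * (r - r0))).
    { apply exp_le. unfold r0 in *. assert (C * (r - (rho + d0)) >= C * (-1)) by (apply Rmult_ge_compat_l; lra). lra. }
    assert (HGr : Gt r0 * exp (- C) <= Gt r).
    { assert (Gt r0 * exp (- C) <= Gt r0 * exp (C * (r - r0))) by (apply Rmult_le_compat_l; lra). lra. }
    destruct (Bnd r ltac:(unfold r0 in *; lra)) as [[L1 L2] _].
    assert (H3 : 0 < 3 * (V0 * V0) / 2) by (rewrite HaV2; nra).
    apply (Rmult_le_reg_l (3 * (V0 * V0) / 2)). exact H3.
    replace (3 * (V0 * V0) / 2 * (Gt r0 * exp (- C) / (3 * (V0 * V0) / 2))) with (Gt r0 * exp (- C)) by (field; lra).
    lra.
Qed.

End Core2.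

Lemma core_all (rho m lambda omega E : R) (A B1 B2 : R -> R) (r1 : R) :
  0 < rho -> 0 < m -> lambda <> 0 ->
  (forall r, rho < r ->
  is_derive A r ((4 * lambda * B1 r - 4 * m * r * B2 r) / (r - rho)) /\
  is_derive B1 r ((lambda * A r + 2 * sfun rho omega E r * B2 r) / (r - rho)) /\
  is_derive B2 r ((- 2 * sfun rho omega E r * B1 r - m * r * A r) / (r - rho))) ->
  (forall r, rho < r -> 0 <= A r) ->
  (forall r, rho < r -> B1 r * B1 r + B2 r * B2 r <= A r * A r / 4) ->
  rho < r1 -> 0 < A r1 ->
  (forall c d, 0 < c -> 0 < d -> (forall r, rho < r < rho + d -> c <= A r) -> False) ->
  (forall c M, 0 < c -> (forall r, M < r -> c <= A r) -> False) -> False.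
Proof.
  intros Hrho Hm Hl HD HA HB Hr1 HA1 N0 NI.
  destruct (Req_dec (omega * rho * rho + E * rho) 0) as [HV|HV].
  - destruct (Rlt_or_le m (Rabs omega)) as [Ho|Ho].
    + apply (large_omega rho m lambda omega E A B1 B2 r1); assumption.
    + apply (small_omega rho m lambda omega E A B1 B2 r1); assumption.
  - apply (V0_nonzero rho m lambda omega E A B1 B2 r1); assumption.
Qed.

Lemma normsq2_Af (f : R -> C * C) r : normsq2 (f r) = Af f r.
Proof. unfold normsq2, Af, U1, V1, U2, V2. rewrite !Cmod_sq. ring. Qed.

Theorem mainTheorem7 :
  forall (M a Q : R), 0 < M -> M ^ 2 = a ^ 2 + Q ^ 2 ->
  a = 0 -> Q <> 0 -> M = Rabs Q ->
  forall (k : R), half_integer k ->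
  forall (m e : R), 0 < m ->
  forall omega : R, ~ energy_eigenvalue M a Q m e k omega.
Proof.
  intros M a Q HM HM2 Ha HQ HMQ k Hk m e Hm omega Hev.
  subst a. unfold energy_eigenvalue in Hev. cbv zeta in Hev.
  destruct Hev as [lambda [f [g [Hrad [[r1 [Hr1 Hf1]] [HL2 [Hang [Hg1 HgL2]]]]]]]].
  assert (Hl : lambda <> 0).
  { intros ->. exact (lambda_nonzero m k omega g Hk Hang Hg1 HgL2). }
  unfold radial_L2 in HL2.
  assert (HAf : forall r, 0 <= Af f r) by (intros; unfold Af; nra).
  apply (core_all M m lambda omega (e * Q) (Af f) (B1f f) (B2f f) r1 HM Hm Hl).
  - intros r Hr. destruct (radial_reduce M Q m e k omega lambda f HM Hrad r Hr) as [D1 [D2 D3]].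
    assert (Hs : Vpot 0 Q omega k e r / (r - M) = sfun M omega (e * Q) r).
    { unfold Vpot, sfun. f_equal. ring. }
    rewrite Hs in D2, D3. auto.
  - intros; auto.
  - intros r Hr. unfold Af, B1f, B2f.
    set (a1 := U1 f r). set (b1 := V1 f r). set (a2 := U2 f r). set (b2 := V2 f r).
    assert (E1 : (a1 * a2 + b1 * b2) * (a1 * a2 + b1 * b2) + (b1 * a2 - a1 * b2) * (b1 * a2 - a1 * b2)
                 = (a1 * a1 + b1 * b1) * (a2 * a2 + b2 * b2)) by ring.
    rewrite E1.
    assert (0 <= (a1 * a1 + b1 * b1 - (a2 * a2 + b2 * b2)) * (a1 * a1 + b1 * b1 - (a2 * a2 + b2 * b2))) by apply Rle_0_sqr.
    lra.
  - exact Hr1.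
  - destruct (Rlt_or_le 0 (Af f r1)) as [H|H]; auto. exfalso. apply Hf1.
    unfold Af, U1, V1, U2, V2 in H.
    destruct (f r1) as [[p1 q1] [p2 q2]]. simpl in H.
    assert (p1 = 0) by nra. assert (q1 = 0) by nra. assert (p2 = 0) by nra. assert (q2 = 0) by nra.
    subst. reflexivity.
  - intros c d Hc Hd Hb.
    apply (nlb_left _ M _ (Rbar_locally_filter p_infty) HL2 (c * M * M) (Rmin d 1)).
    + apply Rmult_lt_0_compat; [apply Rmult_lt_0_compat|]; lra.
    + apply Rmin_glb_lt; lra.
    + intros t Ht. assert (Hd1 : Rmin d 1 <= d) by apply Rmin_l. assert (Hd2 : Rmin d 1 <= 1) by apply Rmin_r.
      rewrite normsq2_Af. set (x := t - M). assert (Hx : 0 < x <= 1) by (unfold x; lra).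
      assert (HAt : c <= Af f t) by (apply Hb; lra).
      assert (Ht2 : M * M <= t ^ 2 + 0 ^ 2) by nra.
      assert (Hcx : c * M * M / x = c * M * M * x / (x ^ 2)) by (field; lra).
      rewrite Hcx. unfold Rdiv. apply Rmult_le_compat_r.
      apply Rlt_le, Rinv_0_lt_compat. nra.
      assert (c * M * M * x <= c * M * M) by (assert (0 < c * M * M) by (apply Rmult_lt_0_compat; [apply Rmult_lt_0_compat|]; lra); nra).
      assert (c * (M * M) <= Af f t * (t ^ 2 + 0 ^ 2)) by (apply Rmult_le_compat; nra).
      lra.
  - intros c M' Hc Hb.
    apply (nlb_inf _ _ (at_right_proper_filter M) HL2 c (Rmax M' M) Hc).
    intros t Ht. assert (H1 : M' <= Rmax M' M) by apply Rmax_l. assert (H2 : M <= Rmax M' M) by apply Rmax_r.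
    rewrite normsq2_Af. assert (HAt : c <= Af f t) by (apply Hb; lra).
    assert (Hx : 0 < t - M) by lra.
    assert (Hq : 1 <= (t ^ 2 + 0 ^ 2) / (t - M) ^ 2).
    { apply (Rmult_le_reg_r ((t - M) ^ 2)). nra. rewrite Rmult_1_l.
      replace ((t ^ 2 + 0 ^ 2) / (t - M) ^ 2 * (t - M) ^ 2) with (t ^ 2 + 0 ^ 2) by (field; lra). nra. }
    unfold Rdiv. rewrite Rmult_assoc. unfold Rdiv in Hq.
    assert (c * 1 <= Af f t * ((t ^ 2 + 0 ^ 2) * / (t - M) ^ 2)) by (apply Rmult_le_compat; lra).
    lra.
Qed.
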